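(* There is a constant $C>0$ such that for all integers $n\ge 2$, $D\ge 1$ and $k$ with $0<k\le D$, there exist a deterministic distributed algorithm and, for every graph $G$ of size $n$ and diameter $D$, an advice assignment of size at most $C\,(n^2\log n)/(D-k+1)$, under which the algorithm accomplishes labeled topology recognition in $G$ within time $D-k$.
   Context: Graphs are finite, simple, undirected, connected, with no node labels; at each node of degree $d$ the incident edges carry distinct port numbers $0,\dots,d-1$ (no coherence between endpoints). Isomorphism is a bijection of nodes preserving edges and port numbers at both endpoints. Size = number of nodes; $\log$ is base 2. Communication model (LOCAL): synchronous rounds, all nodes start simultaneously; in each round every node may send arbitrary messages to all neighbours, receives their messages (knowing the arrival port), and performs arbitrary local computation. Initially a node knows only its degree and its advice. Advice: an oracle knowing the graph assigns each node a binary string; the size of advice is the maximum string length. All nodes run the same deterministic algorithm. Labeled topology recognition: all nodes output the same port-labeled graph $H$ with distinct node labels and each node its own label, such that some isomorphism $G\to H$ maps every node to the node carrying the label it output. Time is the number of rounds until all nodes have output (time $0$ means no communication). *)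

(* Defs.v *)
From mathcomp Require Import all_boot.
From Stdlib Require Import Reals.
Set Implicit Arguments.
Unset Strict Implicit.
Unset Printing Implicit Defensive.

(* [port u v = Some p] : uv is an edge and p is its port number at u;
   [port u v = None]   : u and v are not adjacent. *)
Record pgraph (n : nat) := PGraph { port : 'I_n -> 'I_n -> option nat }.

Definition nbrs n (G : pgraph n) (u : 'I_n) : {set 'I_n} :=
  [set v | port G u v != None].

Definition deg n (G : pgraph n) (u : 'I_n) : nat := #|nbrs G u|.

(* simple (no loops; multi-edges impossible by representation), undirected,
   ports at each node u are exactly 0..deg u - 1, pairwise distinct *)
Definition valid_pgraph n (G : pgraph n) : Prop :=
  [/\ forall u, port G u u = None,
      forall u v, (port G u v != None) = (port G v u != None),
      forall u v p, port G u v = Some p -> (p < deg G u)%N,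
      forall u p, (p < deg G u)%N -> exists v, port G u v = Some p
    & forall u v w p, port G u v = Some p -> port G u w = Some p -> v = w].

Fixpoint ball n (G : pgraph n) (r : nat) (u : 'I_n) : {set 'I_n} :=
  match r with
  | 0 => [set u]
  | r'.+1 => ball G r' u :|: \bigcup_(w in ball G r' u) nbrs G w
  end.

Definition has_diameter n (G : pgraph n) (D : nat) : Prop :=
  (forall u v, v \in ball G D u) /\ exists u v, v \notin ball G D.-1 u.

(* ---------- Outputs: a port-labeled graph H on nodes 'I_m (the node
   labels of H are the indices 0..m-1, hence distinct) and the node's own label *)
Definition output : Type :=
  {m : nat & (('I_m -> 'I_m -> option nat) * 'I_m)%type}.

(* Every node runs the same algorithm.  A node starts knowing only its degree
   and its advice.  In each round it sends, on each port p, the message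
   [send s p], and then updates its state with the list of messages received,
   indexed by arrival port 0..deg-1.  [out s = Some o] means the node outputs o. *)
Record algorithm := Algorithm {
  St : Type;
  Msg : Type;
  init : nat -> seq bool -> St;
  send : St -> nat -> Msg;
  step : St -> seq (option Msg) -> St;
  out : St -> option output }.

Definition advice n := 'I_n -> seq bool.

Definition nbr_at n (G : pgraph n) (w : 'I_n) (q : nat) : option 'I_n :=
  [pick u | port G w u == Some q].

Fixpoint state (A : algorithm) n (G : pgraph n) (adv : advice n) (r : nat)
  : 'I_n -> St A :=
  match r with
  | 0 => fun v => @init A (deg G v) (adv v)
  | r'.+1 =>
      let s := @state A n G adv r' in
      fun w => @step A (s w)
        [seq (match nbr_at G w q with
              | Some u => omap (@send A (s u)) (port G u w)
              | None => None
              end) | q <- iota 0 (deg G w)]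
  end.

Definition outputs_within (A : algorithm) n (G : pgraph n) (adv : advice n)
  (t : nat) (v : 'I_n) (o : output) : Prop :=
  exists r, (r <= t)%N /\ @out A (@state A n G adv r v) = Some o /\
            forall r', (r' < r)%N -> @out A (@state A n G adv r' v) = None.

Definition labeled_TR_within (A : algorithm) n (G : pgraph n) (adv : advice n)
  (t : nat) : Prop :=
  exists (m : nat) (H : 'I_m -> 'I_m -> option nat) (lab : 'I_n -> 'I_m),
    [/\ forall v, outputs_within A G adv t v (existT _ m (H, lab v)),
        bijective lab
      & forall u v, H (lab u) (lab v) = port G u v].

Definition advice_size_le n (adv : advice n) (b : R) : Prop :=
  forall v, (INR (size (adv v)) <= b)%R.

Definition log2 (x : R) : R := (ln x / ln 2)%R.

(* Main.v *)
Require Import Defs.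
From mathcomp Require Import all_boot.
From Stdlib Require Import Reals.
From Stdlib Require Import ClassicalEpsilon Lra.
From mathcomp Require Import zify.
Set Implicit Arguments.
Unset Strict Implicit.
Unset Printing Implicit Defensive.
Local Open Scope nat_scope.

Section Balls.
Variables (n : nat) (G : pgraph n).

Lemma ballS r u x : x \in ball G r.+1 u =
  (x \in ball G r u) || [exists w in ball G r u, x \in nbrs G w].
Proof.
rewrite /= in_setU; congr (_ || _).
apply/bigcupP/existsP => [[w Hw Hx]|[w /andP[Hw Hx]]]; [exists w; exact/andP|by exists w].
Qed.

Lemma ball_self r u : u \in ball G r u.
Proof. elim: r => [|r IH]; first by rewrite /= in_set1. by rewrite ballS IH. Qed.

Lemma ball_mono1 r u x : x \in ball G r u -> x \in ball G r.+1 u.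
Proof. by move=> H; rewrite ballS H. Qed.

Lemma ball_mono r s u x : r <= s -> x \in ball G r u -> x \in ball G s u.
Proof.
move=> /subnK <-; elim: (s - r) => [//|m IH] H; rewrite addSn; exact/ball_mono1/IH.
Qed.

Lemma ball_trans a b x y z : y \in ball G a x -> z \in ball G b y -> z \in ball G (a + b) x.
Proof.
move=> Hy; elim: b z => [|b IH] z; first by rewrite /= in_set1 addn0 => /eqP->.
rewrite ballS addnS => /orP[/IH H|/existsP[w /andP[Hw Hz]]]; first exact: ball_mono1.
rewrite ballS; apply/orP; right; apply/existsP; exists w; rewrite Hz andbT; exact: IH.
Qed.

Lemma ball_split a b x z : z \in ball G (a + b) x -> exists2 y, y \in ball G a x & z \in ball G b y.
Proof.
elim: b z => [|b IH] z; first by rewrite addn0 => H; exists z => //; exact: ball_self.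
rewrite addnS ballS => /orP[/IH [y Hy Hz]|/existsP[w /andP[Hw Hz]]].
  by exists y => //; exact: ball_mono1.
have [y Hy Hwy] := IH _ Hw; exists y => //.
rewrite ballS; apply/orP; right; apply/existsP; exists w; by rewrite Hwy.
Qed.

Hypothesis Hsym : forall u v, (port G u v != None) = (port G v u != None).

Lemma nbrs_sym u v : v \in nbrs G u -> u \in nbrs G v.
Proof. by rewrite !in_set Hsym. Qed.

Lemma ball1 u v : v \in nbrs G u -> v \in ball G 1 u.
Proof. move=> H; rewrite ballS; apply/orP; right; apply/existsP; exists u; by rewrite /= in_set1 eqxx. Qed.

Lemma ball_sym r x y : y \in ball G r x -> x \in ball G r y.
Proof.
elim: r y => [|r IH] y; first by rewrite /= !in_set1 eq_sym.
rewrite ballS => /orP[/IH H|/existsP[w /andP[Hw Hy]]]; first exact: ball_mono1.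
have := ball_trans (ball1 (nbrs_sym Hy)) (IH _ Hw); by rewrite add1n.
Qed.

End Balls.
Local Open Scope nat_scope.

Fixpoint natbits (w x : nat) : seq bool :=
  if w is w'.+1 then odd x :: natbits w' x./2 else [::].

Lemma size_natbits w x : size (natbits w x) = w.
Proof. by elim: w x => [|w IH] x //=; rewrite IH. Qed.

Lemma natbits_inj w x y : x < expn 2 w -> y < expn 2 w -> natbits w x = natbits w y -> x = y.
Proof.
elim: w x y => [|w IH] x y; first by case: x => //; case: y.
rewrite expnS /= => Hx Hy [Ho Hh].
have E : x./2 = y./2.
  apply: IH Hh; by rewrite ltn_half_double -mul2n.
by rewrite -(odd_double_half x) -(odd_double_half y) Ho E.
Qed.

Definition ebits w (e : option nat) := isSome e :: natbits w (odflt 0 e).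

Lemma ebits_inj w e e' : odflt 0 e < expn 2 w -> odflt 0 e' < expn 2 w -> ebits w e = ebits w e' -> e = e'.
Proof.
move=> H1 H2 [Hs Hn]; have := natbits_inj H1 H2 Hn.
by case: e Hs {H1 Hn} => [a|]; case: e' {H2} => [b|] //= _ ->.
Qed.

Definition codebit n w (f : 'I_n -> 'I_n -> option nat) (i : nat) : bool :=
  [exists u : 'I_n, exists v : 'I_n,
     (i %/ w.+1 == u * n + v) && nth false (ebits w (f u v)) (i %% w.+1)].

Lemma pair_inj n (u v u' v' : nat) : v < n -> v' < n -> u * n + v = u' * n + v' -> u = u' /\ v = v'.
Proof.
move=> Hv Hv' E.
have e1 : (u * n + v) %/ n = u by rewrite divnMDl ?divn_small ?addn0 //; lia.
have e2 : (u' * n + v') %/ n = u' by rewrite divnMDl ?divn_small ?addn0 //; lia.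
have e3 : (u * n + v) %% n = v by rewrite modnMDl modn_small.
have e4 : (u' * n + v') %% n = v' by rewrite modnMDl modn_small.
by split; [rewrite -e1 -e2 E | rewrite -e3 -e4 E].
Qed.

Lemma codebit_at n w f (u v : 'I_n) b : b < w.+1 ->
  codebit w f ((u * n + v) * w.+1 + b) = nth false (ebits w (f u v)) b.
Proof.
move=> Hb; rewrite /codebit divnMDl // divn_small // addn0 modnMDl modn_small //.
apply/existsP/idP => [[u' /existsP[v' /andP[/eqP E H]]]|H].
  have [/val_inj e1 /val_inj e2] := pair_inj (ltn_ord v) (ltn_ord v') E.
  by rewrite e1 e2.
by exists u; apply/existsP; exists v; rewrite eqxx H.
Qed.

Definition bounded n w (f : 'I_n -> 'I_n -> option nat) := forall u v, odflt 0 (f u v) < expn 2 w.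

Lemma code_inj n w (f g : 'I_n -> 'I_n -> option nat) : bounded w f -> bounded w g ->
  (forall i, i < n * n * w.+1 -> codebit w f i = codebit w g i) -> f = g.
Proof.
move=> Bf Bg H; apply: FunctionalExtensionality.functional_extensionality => u.
apply: FunctionalExtensionality.functional_extensionality => v.
apply: ebits_inj (Bf u v) (Bg u v) _.
apply: (@eq_from_nth _ false); first by rewrite /= !size_natbits.
move=> b; rewrite /= size_natbits => Hb.
rewrite -!codebit_at //; apply: H.
have Hu := ltn_ord u; have Hv := ltn_ord v.
have : u * n + v < n * n by nia.
move=> Huv; nia.
Qed.

Definition piece n w s (f : 'I_n -> 'I_n -> option nat) j := [seq codebit w f i | i <- iota (j * s) s].

Lemma size_piece n w s f j : size (@piece n w s f j) = s.
Proof. by rewrite size_map size_iota. Qed.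

Lemma piece_inj n w s p (f g : 'I_n -> 'I_n -> option nat) : 0 < s ->
  (forall j, j < p -> piece w s f j = piece w s g j) ->
  forall i, i < p * s -> codebit w f i = codebit w g i.
Proof.
move=> Hs H i Hi.
have Hj : i %/ s < p by rewrite ltn_divLR // mulnC.
have Hr : i %% s < s by rewrite ltn_mod.
have := congr1 (nth false ^~ (i %% s)) (H _ Hj).
by rewrite !(nth_map 0) ?size_iota // nth_iota // -divn_eq.
Qed.
Local Open Scope nat_scope.

Definition consistent n w s p (cl : seq (seq bool)) (f : 'I_n -> 'I_n -> option nat) :=
  forall a j, a \in cl -> j < p -> take w (drop w a) = natbits w j -> drop (w + w) a = piece w s f j.

Definition Hdec n w s p cl : 'I_n -> 'I_n -> option nat :=
  epsilon (inhabits (fun _ _ : 'I_n => @None nat)) (fun f => bounded w f /\ consistent w s p cl f).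

Definition labdec n w (o : 'I_n) (a : seq bool) : 'I_n :=
  odflt o [pick l : 'I_n | take w a == natbits w l].

Definition mkA (n t w s p : nat) (o : 'I_n) : algorithm :=
  {| St := (nat * seq bool * seq (seq bool))%type;
     Msg := seq (seq bool);
     init := fun _ a => (0, a, [:: a]);
     send := fun st _ => st.2;
     step := fun st ms => (st.1.1.+1, st.1.2, st.2 ++ flatten [seq odflt [::] m | m <- ms]);
     out := fun st => if st.1.1 == t then
               Some (existT _ n (@Hdec n w s p st.2, labdec w o st.1.2)) else None |}.

Section St.
Variables (n t w s p : nat) (o : 'I_n) (G : pgraph n) (adv : advice n).
Hypothesis HG : valid_pgraph G.
Let A := mkA t w s p o.

Lemma state_cnt r v : ((state A G adv r v) : St A).1.1 = r /\ ((state A G adv r v) : St A).1.2 = adv v.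
Proof. elim: r v => [|r IH] v //=; by rewrite (proj1 (IH v)) (proj2 (IH v)). Qed.

Lemma state_coll_adv r v a : a \in ((state A G adv r v) : St A).2 -> exists u, a = adv u.
Proof.
elim: r v a => [|r IH] v a /=; first by rewrite in_cons in_nil orbF => /eqP->; exists v.
rewrite mem_cat => /orP[/IH //|/flattenP[l /mapP[m /mapP[q _ ->] ->]]].
case: (nbr_at G v q) => [u|] //=; case: (port G u v) => [pp|] //= /IH //.
Qed.

Lemma state_coll_ball r v u : u \in ball G r v -> adv u \in ((state A G adv r v) : St A).2.
Proof.
case: HG => _ Hsym Hlt _ Huniq.
elim: r v u => [|r IH] v u; first by rewrite /= in_set1 => /eqP->; rewrite mem_seq1.
rewrite -add1n => Hb; have [y Hy Hu] := ball_split Hb.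
have IHy := IH _ _ Hu.
rewrite /= mem_cat.
move: Hy; rewrite ballS /= in_set1 => /orP[/eqP Eyv|/existsP[z /andP[]]].
  by rewrite -Eyv IHy.
rewrite in_set1 => /eqP -> {z}; rewrite in_set => Hvy.
apply/orP; right; apply/flattenP.
exists ((state A G adv r y) : St A).2 => //.
case E: (port G v y) Hvy => [q|] // _.
have Hq := Hlt _ _ _ E.
have Hnb : nbr_at G v q = Some y.
  rewrite /nbr_at; case: pickP => [z /eqP Hz|H0]; first by rewrite (Huniq _ _ _ _ Hz E).
  by have := H0 y; rewrite E eqxx.
have Hyv : port G y v != None by rewrite -Hsym E.
apply/mapP; exists (Some ((state A G adv r y) : St A).2) => //.
apply/mapP; exists q; first by rewrite mem_iota add0n Hq.
rewrite Hnb; case: (port G y v) Hyv => //.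
Qed.

End St.

Lemma ln_mono x y : (0 < x)%R -> (x <= y)%R -> (ln x <= ln y)%R.
Proof. move=> Hx [H|->]; [left; exact: ln_increasing|lra]. Qed.

Lemma powE a b : Nat.pow a b = expn a b.
Proof. elim: b => [|b IH] //=; by rewrite expnS IH multE. Qed.

Lemma real_bound (n tl T sz : nat) : (2 <= n)%N -> (expn 2 tl <= n)%N -> (0 < T)%N ->
  (T * sz <= (4 * tl + 7) * (n * n))%N ->
  (INR sz <= 16 * (INR n ^ 2 * log2 (INR n)) / INR T)%R.
Proof.
move=> Hn Htl HT H.
have HTr : (0 < INR T)%R by apply: lt_0_INR; apply/ltP.
have Hnr : (2 <= INR n)%R by have := le_INR 2 n (elimT leP Hn).
have ln2 : (0 < ln 2)%R by rewrite -ln_1; apply: ln_increasing; lra.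
have Hlg : (1 <= log2 (INR n))%R.
  rewrite /log2; apply: (Rmult_le_reg_r (ln 2)) => //.
  rewrite /Rdiv Rmult_assoc Rinv_l; last lra. rewrite Rmult_1_l Rmult_1_r.
  apply: ln_mono; lra.
have Htlr : (INR tl <= log2 (INR n))%R.
  rewrite /log2; apply: (Rmult_le_reg_r (ln 2)) => //.
  rewrite /Rdiv Rmult_assoc Rinv_l; last lra. rewrite Rmult_1_r -ln_pow; last lra.
  apply: ln_mono; first by apply: pow_lt; lra.
  have -> : (2 ^ tl)%R = INR (Nat.pow 2 tl) by rewrite pow_INR (_ : INR 2 = 2%R) //; simpl; lra.
  apply: le_INR; apply/leP; by rewrite powE.
have Hr : (INR T * INR sz <= (4 * INR tl + 7) * (INR n * INR n))%R.
  rewrite -mult_INR.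
  have -> : (4 * INR tl + 7)%R = INR (4 * tl + 7) by rewrite plus_INR mult_INR /=; lra.
  rewrite -!mult_INR; apply: le_INR; lia.
apply: (Rmult_le_reg_r (INR T)) => //.
rewrite /Rdiv Rmult_assoc Rinv_l; last lra. rewrite Rmult_1_r /= Rmult_1_r.
have Hn2 : (0 <= INR n * INR n)%R by nra.
nra.
Qed.
Lemma arith (t tl n X p : nat) : t.+1 <= 2*p -> X*p <= n*n*(tl.+2) -> t.+1 <= n ->
  t.+1 * (tl.+1 + (tl.+1 + (X + 1))) <= (4*tl+7)*(n*n).
Proof.
move=> H0 HX Hn.
have F3 : t.+1 * X <= 2 * (n*n*(tl.+2)).
  apply: leq_trans (_ : 2 * p * X <= _); first by apply: leq_mul.
  by rewrite -mulnA leq_mul2l /= mulnC.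
have F2 : t.+1 <= n * n by nia.
have F1 : t.+1 * tl <= n * n * tl by apply: leq_mul.
lia.
Qed.

Theorem theorem6p1 :
  exists C : R, (0 < C)%R /\
  forall n D k : nat, (2 <= n)%N -> (1 <= D)%N -> (0 < k)%N -> (k <= D)%N ->
  exists A : algorithm,
  forall G : pgraph n, valid_pgraph G -> has_diameter G D ->
  exists adv : advice n,
    advice_size_le adv
      (C * (INR n ^ 2 * log2 (INR n)) / INR (D - k + 1))%R /\
    labeled_TR_within A G adv (D - k).
Proof.
exists 16%R; split; first lra.
move=> n D k Hn HD Hk HkD.
pose t := D - k; pose w := (trunc_log 2 n).+1; pose p := t./2.+1.
pose L := n * n * w.+1; pose s := L %/ p + 1.
have n0 : (0 < n)%N by lia.
pose o : 'I_n := Ordinal n0.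
exists (mkA t w s p o) => G HG [Hall [u0 [v0 Hv0]]].
have Hsym : forall u v, (port G u v != None) = (port G v u != None) by case: HG.
have dP : forall x, exists r, x \in ball G r u0 by move=> x; exists D; exact: Hall.
pose d x := ex_minn (dP x).
have dball : forall x, x \in ball G (d x) u0 by move=> x; rewrite /d; case: ex_minnP.
have dmin : forall x r, x \in ball G r u0 -> (d x <= r)%N by move=> x r; rewrite /d; case: ex_minnP => m _ Hm /Hm.
have dexact : forall x a b, d x = (a + b)%N -> exists y, d y = a /\ y \in ball G b x.
  move=> x a b Hx; have := dball x; rewrite Hx => /ball_split [y Hy Hxy].
  exists y; split; last exact: ball_sym Hxy.
  apply/eqP; rewrite eqn_leq dmin //=; rewrite leqNgt; apply/negP => Hlt.
  have := dmin _ _ (ball_trans (dball y) Hxy); lia.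
have dv0 : d v0 = D.
  apply/eqP; rewrite eqn_leq dmin ?Hall //=; rewrite leqNgt; apply/negP => Hlt.
  apply: (negP Hv0); apply: ball_mono (dball v0); lia.
have depths : forall i, (i <= D)%N -> exists y, d y = i /\ y \in ball G (D - i) v0.
  move=> i Hi; apply: dexact; lia.
have DltN : (D < n)%N.
  have : (size (iota 0 D.+1) <= size [seq d y | y <- enum 'I_n])%N.
    apply: uniq_leq_size; first exact: iota_uniq.
    move=> i; rewrite mem_iota add0n => /andP[_ Hi].
    have [y [Hy _]] := depths i Hi; apply/mapP; exists y; by rewrite ?mem_enum.
  by rewrite size_iota size_map size_enum_ord.
have Hh : (2 * t./2 <= t /\ t <= 2 * t./2 + 1)%N.
  have := odd_double_half t; rewrite -muln2; case: (odd t) => /= E; lia.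
have cover : forall v c, (c < p)%N -> exists y, y \in ball G t v /\ d y %% p = c.
  move=> v c Hc; case: (leqP c (d v)) => Hcd.
    have E := divn_eq (d v - c) p; have Hr := @ltn_pmod (d v - c) p (ltn0Sn _).
    set q := (d v - c) %/ p in E; set r := (d v - c) %% p in E Hr.
    have [y [Hy Hyv]] := dexact v (c + q * p) r ltac:(lia).
    exists y; split; first by apply: ball_mono Hyv; lia.
    by rewrite Hy addnC modnMDl modn_small.
  have [y [Hy _]] := depths c ltac:(lia).
  exists y; split; last by rewrite Hy modn_small.
  have := ball_trans (ball_sym Hsym (dball v)) (dball y); rewrite Hy => H.
  apply: ball_mono H; lia.
pose cl x := d x %% p.
have clp : forall x, (cl x < p)%N by move=> x; rewrite /cl ltn_pmod.
have pn : (p <= n)%N by lia.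
have n2w : (n < expn 2 w)%N by apply: trunc_log_ltn.
have Bport : bounded w (port G).
  move=> u v; case E: (port G u v) => [q|] /=; last by rewrite expn_gt0.
  case: HG => _ _ Hlt _ _; have := Hlt _ _ _ E.
  have : (deg G u <= n)%N by rewrite /deg -[X in (_ <= X)%N](card_ord n) max_card.
  lia.
pose adv : advice n := fun v => natbits w v ++ (natbits w (cl v) ++ piece w s (port G) (cl v)).
have advT : forall v, take w (adv v) = natbits w v by move=> v; rewrite take_size_cat // size_natbits.
have advC : forall v, take w (drop w (adv v)) = natbits w (cl v).
  by move=> v; rewrite drop_size_cat ?size_natbits // take_size_cat // size_natbits.
have advP : forall v, drop (w + w) (adv v) = piece w s (port G) (cl v).
  by move=> v; rewrite -drop_drop drop_size_cat ?size_natbits // drop_size_cat // size_natbits.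
exists adv; split.
  move=> v.
  rewrite (_ : D - k + 1 = t.+1); last by rewrite /t; lia.
  apply: (@real_bound n (trunc_log 2 n)) => //; first exact: trunc_logP.
  rewrite /adv !size_cat !size_natbits size_piece.
  apply: (@arith t (trunc_log 2 n) n (L %/ p) p); first by rewrite /p; lia.
    by rewrite leq_trunc_div.
  lia.
have Hcoll : forall v, @Hdec n w s p (state (mkA t w s p o) G adv t v : St (mkA t w s p o)).2 = port G.
  move=> v; rewrite /Hdec.
  set P := (fun f => _ /\ _).
  have : P (epsilon (inhabits (fun _ _ : 'I_n => @None nat)) P).
    apply: epsilon_spec; exists (port G); split => //.
    move=> a j /state_coll_adv [u ->] Hj; rewrite advC advP => /natbits_inj E.
    by rewrite E //; have := clp u; lia.
  case=> Bf Cf; apply: code_inj Bf Bport _ => i Hi.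
  apply: (piece_inj (p := p) (s := s)) => //; first by rewrite /s addn1.
    move=> j Hj; have [y [Hy Hyj]] := cover v j Hj.
    have Ha := state_coll_ball t w s p o adv HG Hy.
    rewrite -(Cf _ _ Ha Hj); first by rewrite advP /cl Hyj.
    by rewrite advC /cl Hyj.
  apply: leq_trans Hi _; rewrite /s mulnDr muln1 mulnC.
  have := divn_eq L p; have := @ltn_pmod L p (ltn0Sn _); lia.
exists n, (port G), (fun x : 'I_n => x); split => //; last by exists (fun x : 'I_n => x).
move=> v; exists t; split => //; split.
  have [Hc Ha] := state_cnt t w s p o G adv t v.
  rewrite /= Hc Ha eqxx Hcoll /labdec; case: pickP => [l /eqP Hl|/(_ v)]; last by rewrite advT eqxx.
  rewrite advT in Hl.
  have -> : l = v; last by [].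
  apply: val_inj; symmetry; apply: natbits_inj Hl; have := ltn_ord l; have := ltn_ord v; lia.
move=> r' Hr'; have [Hc _] := state_cnt t w s p o G adv r' v.
by rewrite /= Hc; case: eqP => //; lia.
Qed.
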